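(* Let $\Lambda$ be a row-finite source-free $k$-graph and fix a $\Lambda$-semibranching function system on a $\sigma$-finite measure space $(X, \mu)$. Suppose that a vertex $v$ of $\Lambda$ satisfies $R_{\tau}=R_{v\tau} =D_v$ for all $\tau \in v\Lambda$. If there is a measurable subset $X_v$ of $D_v$ with $0 < \mu(X_v) < \mu(D_v)$, then no $\Lambda$-projective representation arising from this $\Lambda$-semibranching function system is monic.
   Context: A $k$-graph is a countable small category $\Lambda$ with a functor $d:\Lambda\to\mathbb{N}^k$ with unique factorization; vertices $\Lambda^0$, range/source $r,s$, $v\Lambda$ the paths with range $v$; row-finite/source-free: paths of fixed degree and range form a finite/nonempty set. $C^*(\Lambda)$ is the universal $C^*$-algebra of a Cuntz–Krieger $\Lambda$-family. A $\Lambda$-semibranching function system on $(X,\mu)$: measurable $D_\lambda$, prefixing maps $\tau_\lambda:D_\lambda\to X$ with ranges $R_\lambda=\tau_\lambda(D_\lambda)$, coding maps $\tau^m$ such that for each $m\in\mathbb{N}^k$ $\{\tau_\lambda:d(\lambda)=m\}$ is a semibranching function system with coding map $\tau^m$ ($0<\mu(D_\lambda)<\infty$, ranges of finite measure, a.e. disjoint, covering $X$ a.e., $d(\mu\circ\tau_\lambda)/d\mu>0$ a.e., $\tau^m\circ\tau_\lambda=\mathrm{id}$), $\tau_v=\mathrm{id}$ for $v\in\Lambda^0$, $R_\nu\subseteq D_\lambda$ a.e. and $\tau_\lambda\tau_\nu=\tau_{\lambda\nu}$ a.e., $\tau^m\tau^n=\tau^{m+n}$. A $\Lambda$-projective representation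 arising from it: choose $f_\lambda\in L^2$ with $0\ne d(\mu\circ\tau_\lambda^{-1})/d\mu=|f_\lambda|^2$, $f_\lambda(f_\nu\circ\tau^{d(\lambda)})=f_{\lambda\nu}$, and set $T_\lambda f=f_\lambda\cdot(f\circ\tau^{d(\lambda)})$. A representation $\{t_\lambda\}$ on $\mathcal H$ is monic if all $t_\lambda\ne0$ and some $\xi$ satisfies $\overline{\mathrm{span}}\{t_\lambda t_\lambda^*\xi\}=\mathcal H$. *)

(* Defs.v *)
From HB Require Import structures.
From mathcomp Require Import all_boot all_order all_algebra.
From mathcomp Require Import all_classical all_reals all_analysis.
From mathcomp Require Import measurable_realfun complex.

Set Implicit Arguments.
Unset Strict Implicit.
Unset Printing Implicit Defensive.

Import Order.TTheory GRing.Theory Num.Theory.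
Local Open Scope classical_set_scope.
Local Open Scope ring_scope.

Definition degk (k : nat) := 'I_k -> nat.
Definition degk_add (k : nat) (m n : degk k) : degk k := fun i => (m i + n i)%N.
Definition degk0 (k : nat) : degk k := fun _ => 0%N.

(* A k-graph: a countable small category (objects = vertices, morphisms =
   paths) with a degree functor d : Lambda -> N^k having the unique
   factorization property.  [kg_comp l n] is the composite "l n" (meaningful
   when kg_src l = kg_rng n).  Vertices Lambda^0 are identified with the
   identity morphisms [kg_id v]. *)
Record kgraph (k : nat) := KGraph {
  kg_obj : countType;
  kg_mor :> countType;
  kg_rng : kg_mor -> kg_obj;
  kg_src : kg_mor -> kg_obj;
  kg_id : kg_obj -> kg_mor;
  kg_comp : kg_mor -> kg_mor -> kg_mor;
  kg_deg : kg_mor -> degk k;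
  krng_id : forall v, kg_rng (kg_id v) = v;
  ksrc_id : forall v, kg_src (kg_id v) = v;
  krng_comp : forall l n, kg_src l = kg_rng n -> kg_rng (kg_comp l n) = kg_rng l;
  ksrc_comp : forall l n, kg_src l = kg_rng n -> kg_src (kg_comp l n) = kg_src n;
  kcomp_idl : forall l, kg_comp (kg_id (kg_rng l)) l = l;
  kcomp_idr : forall l, kg_comp l (kg_id (kg_src l)) = l;
  kcompA : forall l n p, kg_src l = kg_rng n -> kg_src n = kg_rng p ->
    kg_comp l (kg_comp n p) = kg_comp (kg_comp l n) p;
  kdeg_id : forall v, kg_deg (kg_id v) = @degk0 k;
  kdeg_comp : forall l n, kg_src l = kg_rng n ->
    kg_deg (kg_comp l n) = degk_add (kg_deg l) (kg_deg n);
  kfactor : forall l (m n : degk k), kg_deg l = degk_add m n ->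
    exists! p : kg_mor * kg_mor,
      [/\ kg_src p.1 = kg_rng p.2, kg_comp p.1 p.2 = l, kg_deg p.1 = m & kg_deg p.2 = n]
}.

Definition row_finite (k : nat) (L : kgraph k) :=
  forall (v : kg_obj L) (m : degk k),
    finite_set [set l : L | kg_rng l = v /\ kg_deg l = m].

Definition source_free (k : nat) (L : kgraph k) :=
  forall (v : kg_obj L) (m : degk k),
    [set l : L | kg_rng l = v /\ kg_deg l = m] !=set0.

Section SBFS.
Context (k : nat) (L : kgraph k) (d : measure_display) (X : measurableType d)
  (R : realType) (mu : {measure set X -> \bar R}).

Definition sbfs_range (D : L -> set X) (tau : L -> X -> X) (l : L) : set X :=
  tau l @` D l.

(* D : domains, tau : prefixing maps, coding : coding maps tau^m *)
Definition Lambda_SBFS (D : L -> set X) (tau : L -> X -> X)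
    (coding : degk k -> X -> X) : Prop :=

  (forall l, [/\ measurable (D l), (0 < mu (D l))%E & (mu (D l) < +oo)%E]) /\

  (forall l, measurable_fun (D l) (tau l) /\
     forall A, measurable A -> A `<=` D l -> measurable (tau l @` A)) /\

  (forall l, (mu (sbfs_range D tau l) < +oo)%E) /\

  (forall m, measurable_fun setT (coding m)) /\

  (forall m (l n : L), kg_deg l = m -> kg_deg n = m -> l <> n ->
     mu (sbfs_range D tau l `&` sbfs_range D tau n) = 0%E) /\

  (forall m, mu.-negligible
     (~` \bigcup_(l in [set l : L | kg_deg l = m]) sbfs_range D tau l)) /\

  (forall l, exists h : X -> \bar R,
     [/\ measurable_fun (D l) h, (forall x, 0 <= h x)%E,
         {ae mu, forall x, D l x -> (0 < h x)%E} &
         forall A, measurable A -> A `<=` D l ->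
           mu (tau l @` A) = (\int[mu]_(x in A) h x)%E]) /\

  (forall l x, D l x -> coding (kg_deg l) (tau l x) = x) /\

  (forall (v : kg_obj L) x, D (kg_id v) x -> tau (kg_id v) x = x) /\

  (forall l n : L, kg_src l = kg_rng n ->
     mu.-negligible (sbfs_range D tau n `\` D l)) /\

  (* tau_l o tau_n = tau_{l n} a.e. (as partial maps) *)
  (forall l n : L, kg_src l = kg_rng n ->
     {ae mu, forall x,
        (D (kg_comp l n) x <-> (D n x /\ D l (tau n x))) /\
        (D (kg_comp l n) x -> tau l (tau n x) = tau (kg_comp l n) x)}) /\

  (forall m n, coding m \o coding n = coding (degk_add m n)).

Definition csq (z : complex R) : R := (complex.Re z) ^+ 2 + (complex.Im z) ^+ 2.

(* f is (a representative of) an element of L^2(X, mu) *)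
Definition L2 (f : X -> complex R) : Prop :=
  [/\ measurable_fun setT (fun x => complex.Re (f x)),
      measurable_fun setT (fun x => complex.Im (f x)) &
      (\int[mu]_x (csq (f x))%:E < +oo)%E].

Definition cinner (g h : X -> complex R) : complex R :=
  Complex (Rintegral mu setT (fun x => complex.Re (g x * conjc (h x))))
          (Rintegral mu setT (fun x => complex.Im (g x * conjc (h x)))).

Definition projT (coding : degk k -> X -> X) (f : L -> X -> complex R) (l : L)
    (g : X -> complex R) : X -> complex R :=
  fun x => f l x * g (coding (kg_deg l) x).

Definition arising_proj_rep (D : L -> set X) (tau : L -> X -> X)
    (coding : degk k -> X -> X) (f : L -> X -> complex R) : Prop :=
  [/\ (forall l, L2 (f l)),
      (forall l A, measurable A ->
         mu (D l `&` tau l @^-1` A) = (\int[mu]_(x in A) (csq (f l x))%:E)%E),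
      (forall l, ~ {ae mu, forall x, csq (f l x) = 0}) &
      (forall l n : L, kg_src l = kg_rng n ->
         {ae mu, forall x, f l x * f n (coding (kg_deg l) x) = f (kg_comp l n) x})].

(* eta is (a representative of) T_l^* xi : <T_l g, xi> = <g, eta> for all g *)
Definition is_adjoint_value (coding : degk k -> X -> X) (f : L -> X -> complex R)
    (l : L) (xi eta : X -> complex R) : Prop :=
  L2 eta /\ forall g, L2 g -> cinner (projT coding f l g) xi = cinner g eta.

(* The representation {T_l} on L^2(X, mu) is monic: all T_l are nonzero and
   there is xi with closed span{T_l T_l^* xi} = L^2(X, mu). *)
Definition monic_rep (coding : degk k -> X -> X) (f : L -> X -> complex R) : Prop :=
  (forall l, exists g, L2 g /\ ~ {ae mu, forall x, projT coding f l g x = 0}) /\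
  exists xi, L2 xi /\
  exists eta : L -> X -> complex R,
    (forall l, is_adjoint_value coding f l xi (eta l)) /\
    forall g, L2 g -> forall eps : R, 0 < eps ->
      exists s : seq (L * complex R),
        (\int[mu]_x (csq (g x - \sum_(p <- s) p.2 * projT coding f p.1 (eta p.1) x))%:E
          < eps%:E)%E.

End SBFS.

(* Main.v *)
Require Import Defs.
From HB Require Import structures.
From mathcomp Require Import all_boot all_order all_algebra.
From mathcomp Require Import all_classical all_reals all_analysis.
From mathcomp Require Import measurable_realfun complex.
From mathcomp Require Import ring lra.
Set Implicit Arguments.
Unset Strict Implicit.
Unset Printing Implicit Defensive.
Import Order.TTheory GRing.Theory Num.Theory.
Local Open Scope classical_set_scope.
Local Open Scope ring_scope.

Section CoV.
Local Open Scope ereal_scope.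
Context d (X : measurableType d) (R : realType).
Variable mu : {measure set X -> \bar R}.
Variables (Dl : set X) (mDl : measurable Dl) (t : X -> X) (mt : measurable_fun Dl t).
Variables (g : X -> R) (g0 : forall x, (0 <= g x)%R) (mg : measurable_fun setT g).
Hypothesis H : forall A, measurable A ->
  mu (Dl `&` t @^-1` A) = \int[mu]_(x in A) (g x)%:E.

Import HBNNSimple.

Lemma cov_indic (A : set X) : measurable A ->
  \int[mu]_(x in Dl) (\1_A (t x))%:E = \int[mu]_x ((\1_A x)%:E * (g x)%:E).
Proof.
move=> mA.
have mA' : measurable (Dl `&` t @^-1` A) by exact: mt.
transitivity (\int[mu]_(x in Dl) (\1_(Dl `&` t @^-1` A) x)%:E).
  apply: eq_integral => x /[!inE] Dx; rewrite !indicE.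
  have -> : (x \in Dl `&` t @^-1` A) = (t x \in A).
    by apply/idP/idP => /[!inE]; [case|move=> ?; split].
  by [].
rewrite integral_indic// setIAC setIid H//.
rewrite integral_mkcond; apply: eq_integral => x _.
by rewrite epatch_indic /= muleC.
Qed.

Lemma cov_nnsfun (h : {nnsfun X >-> R}) :
  \int[mu]_(x in Dl) (h (t x))%:E = \int[mu]_x ((h x)%:E * (g x)%:E).
Proof.
have mh r : measurable (h @^-1` [set r]) by exact: measurable_sfunP.
transitivity (\int[mu]_(x in Dl)
   (\sum_(y \in range h) (y * \1_(h @^-1` [set y]) (t x))%:E)).
  by apply: eq_integral => x _; rewrite fimfunE fsumEFin.
transitivity (\int[mu]_x
   (\sum_(y \in range h) (y * \1_(h @^-1` [set y]) x)%:E * (g x)%:E)).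
  rewrite ge0_integral_fsum//; last 2 first.
  - move=> y; apply/measurable_EFinP; apply: measurable_funM => //.
    exact: (measurableT_comp (measurable_indic (mh y)) mt).
  - by move=> y x _; rewrite EFinM; exact: nnfun_muleindic_ge0.
  rewrite ge0_integral_fsum//; last 2 first.
  - move=> y; apply: emeasurable_funM; apply/measurable_EFinP => //.
    exact: measurable_funM.
  - by move=> y x _; apply: mule_ge0; [rewrite EFinM; exact: nnfun_muleindic_ge0|rewrite lee_fin].
  apply: eq_fsbigr => r /[!inE] -[x _ <-].
  have r0 : (0 <= h x)%R by [].
  under eq_integral do rewrite EFinM.
  rewrite (ge0_integralZl_EFin _ mDl _ _ r0); last 2 first.
  - by move=> y _; rewrite lee_fin.
  - exact/measurable_EFinP/(measurableT_comp (measurable_indic (mh _)) mt).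
  under [RHS]eq_integral do rewrite EFinM -muleA.
  rewrite (ge0_integralZl_EFin _ measurableT _ _ r0); last 2 first.
  - by move=> y _; rewrite mule_ge0// lee_fin.
  - by apply: emeasurable_funM; apply/measurable_EFinP.
  by rewrite cov_indic.
apply: eq_integral => x _.
rewrite -ge0_mule_fsuml => [|y]; last by rewrite EFinM; exact: nnfun_muleindic_ge0.
by rewrite fsumEFin // -(fimfunE _ x).
Qed.

Lemma cov_ge0 (F : X -> \bar R) : (forall x, 0 <= F x) -> measurable_fun setT F ->
  \int[mu]_(x in Dl) F (t x) = \int[mu]_x (F x * (g x)%:E).
Proof.
move=> F0 mF.
pose h := nnsfun_approx measurableT mF.
have Flim x : F x = limn (fun n => (h n x)%:E).
  apply/esym; apply: cvg_lim => //.
  exact: (cvg_nnsfun_approx measurableT mF (fun x _ => F0 x) Logic.I).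
transitivity (limn (fun n => \int[mu]_(x in Dl) (h n (t x))%:E)).
  rewrite -monotone_convergence//.
  - by apply: eq_integral => x _; rewrite Flim.
  - move=> n; apply/measurable_EFinP.
    exact: (measurableT_comp (measurable_funPT _) mt).
  - by move=> n x _; rewrite lee_fin.
  - by move=> x _ a b ab; rewrite lee_fin; exact/lefP/nd_nnsfun_approx.
transitivity (limn (fun n => \int[mu]_x ((h n x)%:E * (g x)%:E))).
  by congr (limn _); apply/funext => n; rewrite cov_nnsfun.
rewrite -monotone_convergence//.
- apply: eq_integral => x _.
  have cv : (h n x)%:E @[n --> \oo] --> F x.
    exact: (cvg_nnsfun_approx measurableT mF (fun x _ => F0 x) Logic.I).
  have := @cvgeMr _ _ _ _ _ ((g x)%:E) (erefl true) cv.
  by move/cvg_lim => ->.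
- by move=> n; apply: emeasurable_funM; apply/measurable_EFinP.
- by move=> n x _; rewrite mule_ge0 ?lee_fin.
- move=> x _ a b ab; rewrite lee_wpmul2r ?lee_fin//.
  exact/lefP/nd_nnsfun_approx.
Qed.

Lemma cov_real (F : X -> R) : measurable_fun setT F ->
  \int[mu]_(x in Dl) (F (t x))%:E = \int[mu]_x ((g x * F x)%:E).
Proof.
move=> mF.
have mEF : measurable_fun setT (EFin \o F) by exact/measurable_EFinP.
rewrite integralE [RHS]integralE.
have -> : (fun x => (F (t x))%:E)^\+ = (EFin \o F)^\+ \o t by rewrite -funepos_comp.
have -> : (fun x => (F (t x))%:E)^\- = (EFin \o F)^\- \o t by rewrite -funeneg_comp.
have -> : (fun x => (g x * F x)%:E)^\+ = (fun x => (EFin \o F)^\+ x * (g x)%:E).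
  apply/funext => x.
  rewrite funeposE EFinM -(funeposE (fun y => (g x)%:E * (F y)%:E)).
  by rewrite ge0_funeposM // muleC.
have -> : (fun x => (g x * F x)%:E)^\- = (fun x => (EFin \o F)^\- x * (g x)%:E).
  apply/funext => x.
  rewrite funenegE EFinM -(funenegE (fun y => (g x)%:E * (F y)%:E)).
  by rewrite ge0_funenegM // muleC.
rewrite (cov_ge0 (F:=(EFin \o F)^\+)); last 2 first.
- by move=> x; exact: funepos_ge0.
- exact: measurable_funepos.
rewrite (cov_ge0 (F:=(EFin \o F)^\-)); last 2 first.
- by move=> x; exact: funeneg_ge0.
- exact: measurable_funeneg.
- by [].
Qed.

End CoV.

Section C.
Variable R : realType.
Local Notation C := (complex R).
Lemma ReM (a b : C) : complex.Re (a * b) = complex.Re a * complex.Re b - complex.Im a * complex.Im b.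
Proof. by case: a b => a1 a2 [b1 b2]. Qed.
Lemma ImM (a b : C) : complex.Im (a * b) = complex.Re a * complex.Im b + complex.Im a * complex.Re b.
Proof. by case: a b => a1 a2 [b1 b2]. Qed.
Lemma ReD (a b : C) : complex.Re (a + b) = complex.Re a + complex.Re b.
Proof. by case: a b => a1 a2 [b1 b2]. Qed.
Lemma ImD (a b : C) : complex.Im (a + b) = complex.Im a + complex.Im b.
Proof. by case: a b => a1 a2 [b1 b2]. Qed.
Lemma ReN (a : C) : complex.Re (- a) = - complex.Re a.
Proof. by case: a. Qed.
Lemma ImN (a : C) : complex.Im (- a) = - complex.Im a.
Proof. by case: a. Qed.
Lemma ReJ (a : C) : complex.Re (conjc a) = complex.Re a.
Proof. by case: a. Qed.
Lemma ImJ (a : C) : complex.Im (conjc a) = - complex.Im a.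
Proof. by case: a. Qed.
Lemma Re0 : complex.Re (0 : C) = 0. Proof. by []. Qed.
Lemma Im0 : complex.Im (0 : C) = 0. Proof. by []. Qed.
Lemma Re1 : complex.Re (1 : C) = 1. Proof. by []. Qed.
Lemma Im1 : complex.Im (1 : C) = 0. Proof. by []. Qed.
End C.

Section CMeas.
Context d (X : measurableType d) (R : realType).
Variable mu : {measure set X -> \bar R}.
Local Notation C := (complex R).

Definition cmeas (h : X -> C) :=
  measurable_fun setT (fun x => complex.Re (h x)) /\
  measurable_fun setT (fun x => complex.Im (h x)).

Lemma cmeasM a b : cmeas a -> cmeas b -> cmeas (fun x => a x * b x).
Proof.
move=> [ar ai] [br bi]; split.
  under eq_fun do rewrite ReM.
  by apply: measurable_funB; apply: measurable_funM.
under eq_fun do rewrite ImM.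
by apply: measurable_funD; apply: measurable_funM.
Qed.

Lemma cmeasD a b : cmeas a -> cmeas b -> cmeas (fun x => a x + b x).
Proof.
move=> [ar ai] [br bi]; split.
  by under eq_fun do rewrite ReD; apply: measurable_funD.
by under eq_fun do rewrite ImD; apply: measurable_funD.
Qed.

Lemma cmeasN a : cmeas a -> cmeas (fun x => - a x).
Proof.
move=> [ar ai]; split.
  by under eq_fun do rewrite ReN; apply: measurable_funN.
by under eq_fun do rewrite ImN; apply: measurable_funN.
Qed.

Lemma cmeasB a b : cmeas a -> cmeas b -> cmeas (fun x => a x - b x).
Proof. by move=> ma mb; apply: cmeasD => //; exact: cmeasN. Qed.

Lemma cmeasJ a : cmeas a -> cmeas (fun x => conjc (a x)).
Proof.
move=> [ar ai]; split.
  by under eq_fun do rewrite ReJ.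
by under eq_fun do rewrite ImJ; apply: measurable_funN.
Qed.

Lemma cmeas_cst (c : C) : cmeas (fun _ => c).
Proof. by split; exact: measurable_cst. Qed.

Lemma cmeas_real (r : X -> R) : measurable_fun setT r ->
  cmeas (fun x => Complex (r x) 0).
Proof. by move=> mr; split => //=; exact: measurable_cst. Qed.

Lemma cmeas_comp (h : X -> C) (k : X -> X) : cmeas h -> measurable_fun setT k ->
  cmeas (fun x => h (k x)).
Proof.
move=> [hr hi] mk; split.
  exact: (measurableT_comp hr mk).
exact: (measurableT_comp hi mk).
Qed.

Lemma measurable_csq h : cmeas h -> measurable_fun setT (fun x => csq (h x)).
Proof.
move=> [hr hi]; rewrite /csq.
by apply: measurable_funD; apply: measurable_funX.
Qed.

Lemma csq_ge0 (z : C) : 0 <= csq z.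
Proof. by rewrite /csq addr_ge0 // sqr_ge0. Qed.

Lemma csqM (a b : C) : csq (a * b) = csq a * csq b.
Proof. case: a b => a1 a2 [b1 b2]; rewrite /csq /=. ring. Qed.

Lemma csq_eq0 (z : C) : csq z = 0 -> z = 0.
Proof.
case: z => a b; rewrite /csq /= => /eqP.
rewrite paddr_eq0 ?sqr_ge0 // !sqrf_eq0 => /andP[/eqP -> /eqP ->] //.
Qed.

Lemma abs_ReMJ_le (a b : C) : `|complex.Re (a * conjc b)| <= csq a + csq b.
Proof.
case: a b => a1 a2 [b1 b2]; rewrite /csq /=.
have h1 := sqr_ge0 (a1 - b1); have h2 := sqr_ge0 (a2 - b2).
have h3 := sqr_ge0 (a1 + b1); have h4 := sqr_ge0 (a2 + b2).
rewrite ler_norml; apply/andP; split; nra.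
Qed.

Lemma L2_cmeas h : L2 mu h -> cmeas h.
Proof. by case. Qed.

Lemma L2_fin h : L2 mu h -> (\int[mu]_x (csq (h x))%:E < +oo)%E.
Proof. by case. Qed.

Lemma L2_scale (h k : X -> C) (M : R) : L2 mu h -> cmeas k -> 0 <= M ->
  (forall x, csq (k x) <= M) -> L2 mu (fun x => k x * h x).
Proof.
move=> Lh mk M0 kM.
have [hr hi] := L2_cmeas Lh.
have [mr mi] := cmeasM mk (L2_cmeas Lh).
split => //.
apply: (@le_lt_trans _ _ (\int[mu]_x (M%:E * (csq (h x))%:E))%E).
  apply: ge0_le_integral => //.
  - by move=> x _; rewrite lee_fin csq_ge0.
  - apply/measurable_EFinP; exact: measurable_csq (cmeasM mk (L2_cmeas Lh)).
  - apply: emeasurable_funM; first exact: measurable_cst.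
    apply/measurable_EFinP; exact: measurable_csq (L2_cmeas Lh).
  - move=> x _; rewrite -EFinM lee_fin csqM ler_wpM2r ?csq_ge0 //.
rewrite ge0_integralZl_EFin //; last 2 first.
- by move=> x _; rewrite lee_fin csq_ge0.
- apply/measurable_EFinP; exact: measurable_csq.
by rewrite lte_mul_pinfty // L2_fin.
Qed.

Lemma L2_indic (A : set X) : measurable A -> (mu A < +oo)%E ->
  L2 mu (fun x => Complex (\1_A x) 0).
Proof.
move=> mA muA; split => /=; [exact: measurable_indic|exact: measurable_cst|].
rewrite (_ : (fun x => _) = (fun x => (\1_A x)%:E)); last first.
  apply/funext => x; rewrite /csq /= expr0n /= addr0 indicE.
  by case: (x \in A); rewrite ?expr1n ?expr0n.
by rewrite integral_indic // setIT.
Qed.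

Lemma integrable_ReMJ (a b : X -> C) : L2 mu a -> L2 mu b ->
  mu.-integrable setT (EFin \o (fun x => complex.Re (a x * conjc (b x)))).
Proof.
move=> La Lb.
have [m1 _] := cmeasM (L2_cmeas La) (cmeasJ (L2_cmeas Lb)).
apply/integrableP; split.
  by apply/measurable_EFinP.
apply: (@le_lt_trans _ _ (\int[mu]_x ((csq (a x))%:E + (csq (b x))%:E))%E).
  apply: ge0_le_integral.
  - by [].
  - by move=> x _; rewrite abse_ge0.
  - by apply/measurable_EFinP; apply: measurableT_comp.
  - by apply: emeasurable_funD; apply/measurable_EFinP; apply: measurable_csq;
      apply: L2_cmeas.
  - by move=> x _; rewrite /= -EFinD lee_fin abs_ReMJ_le.
rewrite ge0_integralD //.
- by rewrite lte_add_pinfty // L2_fin.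
- by move=> x _; rewrite lee_fin csq_ge0.
- by apply/measurable_EFinP; apply: measurable_csq; apply: L2_cmeas.
- by move=> x _; rewrite lee_fin csq_ge0.
- by apply/measurable_EFinP; apply: measurable_csq; apply: L2_cmeas.
Qed.

Lemma Rint_eq_int (f1 f2 : X -> R) :
  mu.-integrable setT (EFin \o f1) -> mu.-integrable setT (EFin \o f2) ->
  Rintegral mu setT f1 = Rintegral mu setT f2 ->
  (\int[mu]_x (f1 x)%:E = \int[mu]_x (f2 x)%:E)%E.
Proof.
move=> i1 i2 e; rewrite -(fineK (integrable_fin_num measurableT i1)).
by rewrite -(fineK (integrable_fin_num measurableT i2)); congr (_%:E).
Qed.

End CMeas.

Section Zero.
Context d (X : measurableType d) (R : realType).
Variable mu : {measure set X -> \bar R}.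

Lemma measurable_gt0 (G : X -> R) : measurable_fun setT G ->
  measurable [set x | 0 < G x].
Proof.
move=> mG.
have := mG measurableT _ (measurable_itv (`]0, +oo[ : interval R)).
rewrite setTI; congr measurable; apply/seteqP; split => x /=;
  by rewrite in_itv /= andbT.
Qed.

Lemma pos_null (B : set X) (G : X -> R) : measurable B -> measurable_fun setT G ->
  (forall x, B x -> 0 < G x) -> (\int[mu]_(x in B) (G x)%:E = 0)%E -> mu B = 0%E.
Proof.
move=> mB mG Gp I0.
have : (\int[mu]_(x in B) `|(G x)%:E| = 0)%E.
  rewrite -I0; apply: eq_integral => x /[!inE] Bx.
  by rewrite gee0_abs // lee_fin ltW // Gp.
have mEG : measurable_fun setT (EFin \o G) by exact/measurable_EFinP.
move/(ae_eq_integral_abs mu mB (measurable_funTS mEG)).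
move=> [N [mN N0 sN]].
apply/eqP; rewrite -measure_le0 -N0 le_measure ?inE //.
move=> x Bx; apply: sN => /= H; have := H Bx.
by move=> -[] /eqP; rewrite gt_eqF // Gp.

Qed.

Lemma ae_zero_of_int (Dv : set X) (G : X -> R) : measurable Dv ->
  measurable_fun setT G ->
  (forall B, measurable B -> B `<=` Dv -> (\int[mu]_(x in B) (G x)%:E = 0)%E) ->
  {ae mu, forall x, Dv x -> G x = 0}.
Proof.
move=> mDv mG H.
pose Bp := Dv `&` [set x | 0 < G x].
pose Bn := Dv `&` [set x | 0 < - G x].
have mBp : measurable Bp by apply: measurableI => //; exact: measurable_gt0.
have mNG : measurable_fun setT (fun x => - G x) by exact: measurable_funN.
have mBn : measurable Bn by apply: measurableI => //; exact: measurable_gt0.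
have Bp0 : mu Bp = 0%E.
  apply: (pos_null mBp mG); first by move=> x [].
  by apply: H => //; exact: subIsetl.
have Bn0 : mu Bn = 0%E.
  apply: (pos_null mBn mNG); first by move=> x [].
  under eq_integral do rewrite EFinN.
  have P0 : (\int[mu]_(x in Bn) (EFin \o G)^\+ x = 0)%E.
    rewrite (eq_integral (fun _ => 0%E)) ?integral0 // => x /[!inE] -[_ /=].
    by rewrite funeposE oppr_gt0 => Gn; rewrite max_r // lee_fin ltW.
  rewrite integralN; last by rewrite P0; apply: fin_num_adde_defr.
  by rewrite H ?oppe0 //; exact: subIsetl.
apply: (@negligibleS _ _ _ _ (Bp `|` Bn)).
  move=> x /= /not_implyP [Dx /eqP Gx].
  case: (ltgtP (G x) 0) => [Gn|Gp|G0].
  - by right; split => //=; rewrite oppr_gt0.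
  - by left.
  - by rewrite G0 eqxx in Gx.
by apply: negligibleU; apply/negligibleP.
Qed.

Lemma int_pos (A : set X) (rho : X -> R) : measurable A ->
  measurable_fun setT rho -> (forall x, A x -> 0 < rho x) -> (0 < mu A)%E ->
  (0 < \int[mu]_(x in A) (rho x)%:E)%E.
Proof.
move=> mA mr rp muA.
rewrite lt_neqAle integral_ge0 ?andbT; last by move=> x Ax; rewrite lee_fin ltW // rp.
apply/negP => /eqP I0.
have := pos_null mA mr rp (esym I0).
by move=> h; rewrite h ltxx in muA.
Qed.

End Zero.

Section Main.
Context (k : nat) (L : kgraph k) (d : measure_display) (X : measurableType d)
  (R : realType) (mu : {measure set X -> \bar R})
  (D : L -> set X) (tau : L -> X -> X) (coding : degk k -> X -> X).
Hypothesis hS : Lambda_SBFS mu D tau coding.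
Variable f : L -> X -> complex R.
Hypothesis hf : arising_proj_rep mu D tau coding f.

Lemma S_dom l : [/\ measurable (D l), (0 < mu (D l))%E & (mu (D l) < +oo)%E].
Proof. by case: hS => [c1 [c2 [c3 [c4 [c5 [c6 [c7 [c8 [c9 [c10 [c11 c12]]]]]]]]]]]; exact: c1. Qed.
Lemma S_meas l : measurable_fun (D l) (tau l) /\
     forall A, measurable A -> A `<=` D l -> measurable (tau l @` A).
Proof. by case: hS => [c1 [c2 [c3 [c4 [c5 [c6 [c7 [c8 [c9 [c10 [c11 c12]]]]]]]]]]]; exact: c2. Qed.
Lemma S_coding_meas m : measurable_fun setT (coding m).
Proof. by case: hS => [c1 [c2 [c3 [c4 [c5 [c6 [c7 [c8 [c9 [c10 [c11 c12]]]]]]]]]]]; exact: c4. Qed.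
Lemma S_disj m (l n : L) : kg_deg l = m -> kg_deg n = m -> l <> n ->
     mu (sbfs_range D tau l `&` sbfs_range D tau n) = 0%E.
Proof. by case: hS => [c1 [c2 [c3 [c4 [c5 [c6 [c7 [c8 [c9 [c10 [c11 c12]]]]]]]]]]]; exact: c5. Qed.
Lemma S_RN l : exists h : X -> \bar R,
     [/\ measurable_fun (D l) h, (forall x, 0 <= h x)%E,
         {ae mu, forall x, D l x -> (0 < h x)%E} &
         forall A, measurable A -> A `<=` D l ->
           mu (tau l @` A) = (\int[mu]_(x in A) h x)%E].
Proof. by case: hS => [c1 [c2 [c3 [c4 [c5 [c6 [c7 [c8 [c9 [c10 [c11 c12]]]]]]]]]]]; exact: c7. Qed.
Lemma S_codinv l x : D l x -> coding (kg_deg l) (tau l x) = x.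
Proof. by case: hS => [c1 [c2 [c3 [c4 [c5 [c6 [c7 [c8 [c9 [c10 [c11 c12]]]]]]]]]]]; exact: c8. Qed.
Lemma S_vid (v : kg_obj L) x : D (kg_id v) x -> tau (kg_id v) x = x.
Proof. by case: hS => [c1 [c2 [c3 [c4 [c5 [c6 [c7 [c8 [c9 [c10 [c11 c12]]]]]]]]]]]; exact: c9. Qed.
Lemma S_rangedom (l n : L) : kg_src l = kg_rng n ->
     mu.-negligible (sbfs_range D tau n `\` D l).
Proof. by case: hS => [c1 [c2 [c3 [c4 [c5 [c6 [c7 [c8 [c9 [c10 [c11 c12]]]]]]]]]]]; exact: c10. Qed.

Lemma F_L2 l : L2 mu (f l). Proof. by case: hf. Qed.
Lemma F_push l A : measurable A ->
  mu (D l `&` tau l @^-1` A) = (\int[mu]_(x in A) (csq (f l x))%:E)%E.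
Proof. by case: hf => _ H _ _; exact: H. Qed.

Lemma mrange l : measurable (sbfs_range D tau l).
Proof.
have [mD _ _] := S_dom l.
by have [_ H] := S_meas l; exact: H.
Qed.

Lemma negl_ae (A : set X) : mu.-negligible A -> {ae mu, forall x, ~ A x}.
Proof.
move=> nA; apply: negligibleS nA => x /=; exact: contrapT.
Qed.

Lemma f_off_range l : {ae mu, forall x, ~ sbfs_range D tau l x -> f l x = 0}.
Proof.
have mR := mrange l.
have mC : measurable (~` sbfs_range D tau l) by exact: measurableC.
have I0 : (\int[mu]_(x in ~` sbfs_range D tau l) `|(csq (f l x))%:E| = 0)%E.
  rewrite (eq_integral (fun x => (csq (f l x))%:E)); last first.
    by move=> x _; rewrite gee0_abs // lee_fin csq_ge0.
  rewrite -F_push //.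
  rewrite (_ : _ `&` _ = set0) ?measure0 //.
  by apply/seteqP; split => x // [Dx /= nR]; apply: nR; exists x.
have mcsq : measurable_fun setT (fun x => (csq (f l x))%:E).
  by apply/measurable_EFinP; apply: measurable_csq; apply: L2_cmeas; exact: F_L2.
move: I0 => /(ae_eq_integral_abs mu mC (measurable_funTS mcsq)).
apply: filterS => x H nR; apply: csq_eq0.
by have := H nR => -[].
Qed.

Lemma vid_range (w : kg_obj L) : sbfs_range D tau (kg_id w) = D (kg_id w).
Proof.
apply/seteqP; split => x.
  by move=> [y Dy <-]; rewrite S_vid.
by move=> Dx; exists x => //; rewrite S_vid.
Qed.

Lemma vid_disj (w v : kg_obj L) : w <> v ->
  mu (D (kg_id w) `&` D (kg_id v)) = 0%E.
Proof.
move=> wv; rewrite -!vid_range.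
apply: (@S_disj (@degk0 k)); rewrite ?kdeg_id //.
by move=> e; apply: wv; rewrite -[w](krng_id w) e krng_id.
Qed.

Lemma f_off_vertex l (v : kg_obj L) : kg_rng l <> v ->
  {ae mu, forall x, D (kg_id v) x -> f l x = 0}.
Proof.
move=> lv.
have h1 := f_off_range l.
have h2 : {ae mu, forall x, ~ (sbfs_range D tau l `\` D (kg_id (kg_rng l))) x}.
  by apply: negl_ae; apply: S_rangedom; rewrite ksrc_id.
have h3 : {ae mu, forall x, ~ (D (kg_id (kg_rng l)) `&` D (kg_id v)) x}.
  apply: negl_ae; apply/negligibleP; last exact: vid_disj.
  by apply: measurableI; [case: (S_dom (kg_id (kg_rng l)))|case: (S_dom (kg_id v))].
apply: filterS (filterI (filterI h1 h2) h3) => x [[a b] c] Dv.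
apply: a => Rl; apply: c; split => //.
by apply: contrapT => nD; apply: b.
Qed.

End Main.

Section Alg.
Variable R : realType.
Local Notation C := (complex R).
Lemma alg1 (a c e : C) (b : R) :
  complex.Re (a * (c * Complex b 0) * e) = b * complex.Re (c * (a * e)).
Proof. case: a c e => a1 a2 [c1 c2] [e1 e2] /=; ring. Qed.
Lemma alg2 (c e : C) (b : R) :
  complex.Re (c * Complex b 0 * conjc e) = complex.Re (c * conjc e) * b.
Proof. case: c e => c1 c2 [e1 e2] /=; ring. Qed.
Lemma alg3 (a c e : C) :
  csq a * complex.Re (c * conjc e) = complex.Re (c * (a * conjc (a * e))).
Proof. case: a c e => a1 a2 [c1 c2] [e1 e2]; rewrite /csq /=; ring. Qed.
Lemma alg4 (c a x y : C) : complex.Re (c * (a * conjc (x - y))) =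
  complex.Re (c * (a * conjc x)) - complex.Re (c * (a * conjc y)).
Proof. case: c a x y => c1 c2 [a1 a2] [x1 x2] [y1 y2] /=; ring. Qed.
Lemma alg5 (w : C) : complex.Re (1 * w) = 0 -> complex.Re (Complex 0 1 * w) = 0 -> w = 0.
Proof. case: w => w1 w2 /= h1 h2; apply/eqP; rewrite eq_complex /=; apply/andP; split; apply/eqP; lra. Qed.
End Alg.

Section K1b.
Context (k : nat) (L : kgraph k) (d : measure_display) (X : measurableType d)
  (R : realType) (mu : {measure set X -> \bar R})
  (D : L -> set X) (tau : L -> X -> X) (coding : degk k -> X -> X).
Hypothesis hS : Lambda_SBFS mu D tau coding.
Variable f : L -> X -> complex R.
Hypothesis hf : arising_proj_rep mu D tau coding f.
Variables (v : kg_obj L) (l : L).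
Hypothesis Hrange : sbfs_range D tau l = D (kg_id v).
Variables (xi et : X -> complex R).
Hypothesis Lxi : L2 mu xi.
Hypothesis Hadj : is_adjoint_value mu coding f l xi et.

Local Notation Dv := (D (kg_id v)).
Local Notation Dl := (D l).
Local Notation t := (tau l).
Local Notation cn := (coding (kg_deg l)).
Local Notation fl := (f l).
Definition phi x := fl x * et (cn x).

Let mDl : measurable Dl. Proof. by case: (S_dom hS l). Qed.
Let mDv : measurable Dv. Proof. by case: (S_dom hS (kg_id v)). Qed.
Let muDl : (mu Dl < +oo)%E. Proof. by case: (S_dom hS l). Qed.
Let mt : measurable_fun Dl t. Proof. by case: (S_meas hS l). Qed.
Let mcn : measurable_fun setT cn. Proof. exact: (S_coding_meas hS). Qed.
Let Lf : L2 mu fl. Proof. exact: (F_L2 hf). Qed.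
Let Leta : L2 mu et. Proof. by case: Hadj. Qed.
Let mg : measurable_fun setT (fun x => csq (fl x)).
Proof. exact: (measurable_csq (L2_cmeas Lf)). Qed.
Let g0 x : 0 <= csq (fl x). Proof. exact: csq_ge0. Qed.
Let Hpush A : measurable A ->
  mu (Dl `&` t @^-1` A) = (\int[mu]_(x in A) (csq (fl x))%:E)%E.
Proof. exact: (F_push hf). Qed.

Lemma inv_Dv x : Dv x -> Dl (cn x) /\ t (cn x) = x.
Proof.
rewrite -Hrange => -[y Dy <-].
by rewrite (S_codinv hS Dy).
Qed.

Lemma L2_phi : L2 mu phi.
Proof.
have mphi := cmeasM (L2_cmeas Lf) (cmeas_comp (L2_cmeas Leta) mcn).
split; [by case: mphi|by case: mphi|].
rewrite /phi.
have mce : measurable_fun setT (fun x => (csq (et (cn x)))%:E).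
  by apply/measurable_EFinP; apply: measurable_csq; exact: cmeas_comp (L2_cmeas Leta) mcn.
rewrite (eq_integral (fun x => (csq (et (cn x)))%:E * (csq (fl x))%:E)%E); last first.
  by move=> x _; rewrite csqM EFinM muleC.
rewrite -(cov_ge0 mDl mt g0 mg Hpush); last 2 first.
- by move=> x; rewrite lee_fin csq_ge0.
- exact: mce.
rewrite (eq_integral (fun x => (csq (et x))%:E)); last first.
  by move=> x /[!inE] Dx; rewrite (S_codinv hS Dx).
apply: le_lt_trans (L2_fin Leta).
apply: ge0_subset_integral => //.
- by apply/measurable_EFinP; apply: measurable_csq; exact: (L2_cmeas Leta).
- by move=> x _; rewrite lee_fin csq_ge0.
Qed.

Lemma fl_nz : {ae mu, forall x, Dv x -> fl x != 0}.
Proof.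
pose Z := Dv `&` [set x | csq (fl x) = 0].
have mZ : measurable Z.
  apply: measurableI => //.
  have := mg measurableT (measurable_set1 (0:R)); rewrite setTI.
  by congr measurable.
have mA : measurable (Dl `&` t @^-1` Z) by exact: mt.
have A0 : mu (Dl `&` t @^-1` Z) = 0%E.
  rewrite Hpush //; apply: integral0_eq => x [_ /= ->] //.
have [h [mh h0 _ Hh]] := S_RN hS l.
have tA0 : mu (t @` (Dl `&` t @^-1` Z)) = 0%E.
  rewrite Hh //; try exact: subIsetl.
  rewrite (eq_integral (fun x => `|h x|)%E); last by move=> x _; rewrite gee0_abs.
  apply: integral_abs_eq0 => //.
  exact: measurable_funS mh.
have mtA : measurable (t @` (Dl `&` t @^-1` Z)).
  by case: (S_meas hS l) => _; apply => //; exact: subIsetl.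
exists (t @` (Dl `&` t @^-1` Z)); split => //.
move=> x /= /not_implyP [Dvx nz].
have fx0 : fl x = 0 by apply/eqP; apply: contrapT => /negP.
have [Dc tc] := inv_Dv Dvx.
exists (cn x) => //; split => //=.
by rewrite tc; split => //=; rewrite fx0 /csq /= expr0n /= addr0.
Qed.

Lemma perB (c : complex R) (B : set X) : measurable B -> B `<=` Dv ->
  (\int[mu]_(x in B) (complex.Re (c * (fl x * conjc (xi x - phi x))))%:E = 0)%E.
Proof.
move=> mB BD.
pose C := Dl `&` t @^-1` B.
have mC : measurable C by exact: mt.
have muC : (mu C < +oo)%E.
  apply: le_lt_trans muDl; apply: le_measure; rewrite ?inE //; exact: subIsetl.
pose ind := fun y => Complex (\1_C y) 0 : complex R.
pose u := fun y => c * ind y.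
have Lind : L2 mu ind := L2_indic mC muC.
have csq_ind y : csq (ind y) <= 1.
  rewrite /csq /= expr0n /= addr0 indicE.
  by case: (y \in C); rewrite ?expr1n ?expr0n.
have Lu : L2 mu u.
  exact: (L2_scale Lind (cmeas_cst X c) (csq_ge0 c) (fun _ => le_refl _)).
have cmu : cmeas u by exact: (L2_cmeas Lu).
have Lpu : L2 mu (projT coding f l u).
  have -> : projT coding f l u = (fun x => u (cn x) * fl x).
    by apply/funext => x; rewrite /projT mulrC.
  apply: (L2_scale Lf (cmeas_comp cmu mcn) (csq_ge0 c)).
  by move=> x; rewrite /u csqM -[leRHS]mulr1 ler_wpM2l ?csq_ge0.
have adj := Hadj.2 u Lu.
have E1 := Rint_eq_int (integrable_ReMJ Lpu Lxi) (integrable_ReMJ Lu Leta)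
  (congr1 (@complex.Re R) adj).
pose P := fun x => complex.Re (c * (fl x * conjc (xi x))).
pose Q := fun x => complex.Re (c * (fl x * conjc (phi x))).
have Lcf : L2 mu (fun x => c * fl x) := L2_scale Lf (cmeas_cst X c) (csq_ge0 c) (fun _ => le_refl _).
have LphiP := L2_phi.
have iP : mu.-integrable setT (EFin \o P).
  have := integrable_ReMJ Lcf Lxi; congr (_.-integrable _ _).
  by apply/funext => x; rewrite /= /P mulrA.
have iQ : mu.-integrable setT (EFin \o Q).
  have := integrable_ReMJ Lcf LphiP; congr (_.-integrable _ _).
  by apply/funext => x; rewrite /= /Q mulrA.
have mP : measurable_fun setT P by case/integrableP: iP => /measurable_EFinP.
have mQ : measurable_fun setT Q by case/integrableP: iQ => /measurable_EFinP.
have mIB : measurable_fun setT (\1_B : X -> R) by exact: measurable_indic.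
have toB (S : set X) (F : X -> R) :
    (\int[mu]_x (F x * \1_S x)%:E = \int[mu]_(x in S) (F x)%:E)%E.
  rewrite [RHS]integral_mkcond epatch_indic.
  by apply: eq_integral => x _; rewrite /= EFinM.
have E2 : (\int[mu]_x (complex.Re (projT coding f l u x * conjc (xi x)))%:E =
           \int[mu]_x (P x * \1_B x)%:E)%E.
  apply: (ae_eq_integral (fun x => (P x * \1_B x)%:E)) => //.
  - apply/measurable_EFinP.
    by case: (cmeasM (L2_cmeas Lpu) (cmeasJ (L2_cmeas Lxi))).
  - by apply/measurable_EFinP; apply: measurable_funM.
  have h := f_off_range hS hf l; rewrite Hrange in h.
  apply: filterS h => x hx _.
  case: (pselect (Dv x)) => Dx.
  - have [Dc tc] := inv_Dv Dx.
    rewrite /projT /u /ind alg1 mulrC.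
    congr (_ * _)%:E; rewrite !indicE.
    have -> : (cn x \in C) = (x \in B).
      apply/idP/idP; rewrite !inE /C.
        by move=> [_ /=]; rewrite tc.
      by move=> Bx; split => //=; rewrite tc.
    by [].
  - rewrite /projT hx // !mul0r indicE memNset ?mulr0 //.
    by move=> Bx; apply: Dx; exact: BD.
have E3 : (\int[mu]_x (complex.Re (u x * conjc (et x)))%:E =
           \int[mu]_x (Q x * \1_B x)%:E)%E.
  pose F := fun y => complex.Re (c * conjc (et y)).
  pose G := fun x => \1_B x * complex.Re (c * conjc (et (cn x))).
  have mG : measurable_fun setT G.
    apply: measurable_funM => //.
    by case: (cmeasM (cmeas_cst X c) (cmeasJ (cmeas_comp (L2_cmeas Leta) mcn))).
  transitivity (\int[mu]_x (F x * \1_C x)%:E)%E.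
    by apply: eq_integral => x _; rewrite /u /ind alg2.
  rewrite toB integral_mkcondr.
  transitivity (\int[mu]_(y in Dl) (G (t y))%:E)%E.
    apply: eq_integral => y /[!inE] Dy; rewrite /G (S_codinv hS Dy) patchE indicE.
    case: ifPn => [/set_mem Bty|nBty].
      have Bty' : B (t y) := Bty.
      by rewrite (mem_set Bty') mul1r.
    have -> : (t y \in B) = false.
      apply/negbTE/negP => /set_mem h; move/negP: nBty; apply.
      have h' : (t @^-1` B) y := h.
      exact: mem_set h'.
    by rewrite mul0r.
  rewrite (cov_real mDl mt g0 mg Hpush mG).
  apply: eq_integral => x _; rewrite /G /Q /phi.
  by rewrite mulrCA alg3 mulrC.
have EPQ : (\int[mu]_(x in B) (P x)%:E = \int[mu]_(x in B) (Q x)%:E)%E.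
  by rewrite -(toB B P) -(toB B Q) -E2 -E3.
rewrite (eq_integral (fun x => (P x)%:E - (Q x)%:E)%E); last first.
  by move=> x _; rewrite /P /Q alg4 EFinB.
rewrite integralB_EFin //; last 2 first.
- exact: integrableS iP.
- exact: integrableS iQ.
rewrite EPQ subee //.
exact: integrable_fin_num (integrableS _ _ _ iQ).
Qed.

Lemma phi_eq_xi : {ae mu, forall x, Dv x -> phi x = xi x}.
Proof.
have mw (c : complex R) : measurable_fun setT
    (fun x => complex.Re (c * (fl x * conjc (xi x - phi x)))).
  case: (cmeasM (cmeas_cst X c) (cmeasM (L2_cmeas Lf)
     (cmeasJ (cmeasB (L2_cmeas Lxi) (L2_cmeas L2_phi))))) => //.
have h1 := ae_zero_of_int mDv (mw 1) (@perB 1).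
have h2 := ae_zero_of_int mDv (mw (Complex 0 1)) (@perB (Complex 0 1)).
apply: filterS (filterI (filterI h1 h2) fl_nz) => x [[a b] c] Dx.
have w0 := alg5 (a Dx) (b Dx).
move/eqP: w0; rewrite mulf_eq0 (negbTE (c Dx)) /= => /eqP.
move/eqP; rewrite conjc_eq0 subr_eq0 => /eqP ->.
by [].
Qed.

End K1b.

Section PW.
Variable R : realType.
Local Notation C := (complex R).
Lemma csqN (w : C) : csq (- w) = csq w.
Proof. case: w => a b; rewrite /csq /=; ring. Qed.
Lemma csq1 : csq (1 : C) = 1.
Proof. by rewrite /csq /= expr0n /= addr0 expr1n. Qed.
Lemma pw1 (z c : C) (b : R) : (z = 0 -> b = 1) -> (z != 0 -> b = 0) ->
  complex.Re c <= 0 -> csq (z + Complex b 0) <= csq ((z + Complex b 0) - c * z).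
Proof.
move=> h1 h2 hc; case: (eqVneq z 0) => [z0|nz].
  by rewrite z0 (h1 z0) mulr0 subr0.
rewrite (h2 nz) (_ : Complex 0 0 = 0) // addr0.
rewrite (_ : z - c * z = (1 - c) * z); last by rewrite mulrBl mul1r.
rewrite csqM ler_peMl ?csq_ge0 //.
move: hc; case: c => c1 c2 /= hc; rewrite /csq /=; nra.
Qed.
Lemma pw2 (z c : C) (b : R) : (z = 0 -> b = 1) -> (z != 0 -> b = 0) ->
  0 <= complex.Re c -> csq (z + Complex b 0) <= csq (- (z + Complex b 0) - c * z).
Proof.
move=> h1 h2 hc; case: (eqVneq z 0) => [z0|nz].
  by rewrite z0 (h1 z0) mulr0 subr0 csqN.
rewrite (h2 nz) (_ : Complex 0 0 = 0) // addr0.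
rewrite (_ : - z - c * z = - ((1 + c) * z)); last by rewrite mulrDl mul1r opprD.
rewrite csqN csqM ler_peMl ?csq_ge0 //.
move: hc; case: c => c1 c2 /= hc; rewrite /csq /=; nra.
Qed.
End PW.

Section L2add.
Context d (X : measurableType d) (R : realType).
Variable mu : {measure set X -> \bar R}.
Lemma L2_add (a b : X -> complex R) : L2 mu a -> L2 mu b -> L2 mu (fun x => a x + b x).
Proof.
move=> La Lb.
have [mr mi] := cmeasD (L2_cmeas La) (L2_cmeas Lb).
split => //.
have ma := measurable_csq (L2_cmeas La).
have mb := measurable_csq (L2_cmeas Lb).
apply: (@le_lt_trans _ _ (\int[mu]_x ((2 * csq (a x))%:E + (2 * csq (b x))%:E))%E).
  apply: ge0_le_integral.
  - by [].
  - by move=> x _; rewrite lee_fin csq_ge0.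
  - by apply/measurable_EFinP; apply: measurable_csq; exact: cmeasD (L2_cmeas La) (L2_cmeas Lb).
  - by apply: emeasurable_funD; apply/measurable_EFinP; apply: measurable_funM => //; exact: measurable_cst.
  - move=> x _; rewrite -EFinD lee_fin.
    case: (a x) (b x) => a1 a2 [b1 b2]; rewrite /csq /=.
    have h1 := sqr_ge0 (a1 - b1); have h2 := sqr_ge0 (a2 - b2); nra.
rewrite ge0_integralD //; last 4 first.
- by move=> x _; rewrite lee_fin mulr_ge0 ?csq_ge0.
- by apply/measurable_EFinP; apply: measurable_funM => //; exact: measurable_cst.
- by move=> x _; rewrite lee_fin mulr_ge0 ?csq_ge0.
- by apply/measurable_EFinP; apply: measurable_funM => //; exact: measurable_cst.
under eq_integral do rewrite EFinM.
under [X in (_ + X)%E]eq_integral do rewrite EFinM.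
rewrite ge0_integralZl_EFin //; last 2 first.
- by move=> x _; rewrite lee_fin csq_ge0.
- exact/measurable_EFinP.
rewrite ge0_integralZl_EFin //; last 2 first.
- by move=> x _; rewrite lee_fin csq_ge0.
- exact/measurable_EFinP.
by rewrite lte_add_pinfty // lte_mul_pinfty // L2_fin.
Qed.

Lemma cmeas_sum (I : Type) (s : seq I) (F : I -> X -> complex R) :
  (forall i, cmeas (F i)) -> cmeas (fun x => \sum_(p <- s) F p x).
Proof.
move=> mF; elim: s => [|a s IH].
  by under eq_fun do rewrite big_nil; exact: cmeas_cst.
under eq_fun do rewrite big_cons; exact: cmeasD.
Qed.
End L2add.

Section Final.
Context (k : nat) (L : kgraph k) (d : measure_display) (X : measurableType d)
  (R : realType) (mu : {measure set X -> \bar R})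
  (D : L -> set X) (tau : L -> X -> X) (coding : degk k -> X -> X)
  (v : kg_obj L).
Hypothesis hS : Lambda_SBFS mu D tau coding.
Hypothesis Hr : forall t : L, kg_rng t = v ->
     sbfs_range D tau t = D (kg_id v) /\
     sbfs_range D tau (kg_comp (kg_id v) t) = D (kg_id v).
Variable f : L -> X -> complex R.
Hypothesis hf : arising_proj_rep mu D tau coding f.
Variables (xi : X -> complex R) (eta : L -> X -> complex R).
Hypothesis Lxi : L2 mu xi.
Hypothesis Hadj : forall l, is_adjoint_value mu coding f l xi (eta l).

Local Notation Dv := (D (kg_id v)).

Lemma K1 l : exists c : complex R,
  {ae mu, forall x, Dv x -> projT coding f l (eta l) x = c * xi x}.
Proof.
case: (pselect (kg_rng l = v)) => lv.
  exists 1; have := phi_eq_xi hS hf (Hr lv).1 Lxi (Hadj l).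
  by apply: filterS => x h Dx; rewrite mul1r -h.
exists 0; have := f_off_vertex hS hf lv.
by apply: filterS => x h Dx; rewrite mul0r /projT h // mul0r.
Qed.

Lemma Kseq (s : seq (L * complex R)) : exists c : complex R,
  {ae mu, forall x, Dv x ->
    \sum_(p <- s) p.2 * projT coding f p.1 (eta p.1) x = c * xi x}.
Proof.
elim: s => [|[l a] s [c IH]].
  by exists 0; apply: aeW => x _; rewrite big_nil mul0r.
have [cl Hl] := K1 l.
exists (a * cl + c); apply: filterS (filterI Hl IH) => x [h1 h2] Dx.
by rewrite big_cons /= h1 // h2 // mulrDl mulrA.
Qed.

End Final.

Unset Implicit Arguments.
Set Strict Implicit.

Theorem proposition3p9 (k : nat) (L : kgraph k)
    (d : measure_display) (X : measurableType d) (R : realType)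
    (mu : {measure set X -> \bar R})
    (D : L -> set X) (tau : L -> X -> X) (coding : degk k -> X -> X)
    (v : kg_obj L) (Xv : set X) :
  row_finite L -> source_free L ->
  sigma_finite setT mu ->
  Lambda_SBFS mu D tau coding ->
  (forall t : L, kg_rng t = v ->
     sbfs_range D tau t = D (kg_id v) /\
     sbfs_range D tau (kg_comp (kg_id v) t) = D (kg_id v)) ->
  measurable Xv -> Xv `<=` D (kg_id v) ->
  (0 < mu Xv)%E -> (mu Xv < mu (D (kg_id v)))%E ->
  forall f : L -> X -> complex R,
    arising_proj_rep mu D tau coding f -> ~ monic_rep mu coding f.
Proof.
move=> _ _ _ hS Hr mXv XvD muXv0 muXvD f hf [_ [xi [Lxi [eta [Hadj Happ]]]]].
set Dv := D (kg_id v).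
have [mDv _ muDvfin] := S_dom hS (kg_id v).
pose Z := Dv `&` [set x | csq (xi x) = 0].
have mcsqxi := measurable_csq (L2_cmeas Lxi).
have mZ : measurable Z.
  apply: measurableI => //.
  have := mcsqxi measurableT [set 0] (measurable_set1 (0:R)); rewrite setTI.
  by congr measurable.
have muZ : (mu Z < +oo)%E.
  by apply: le_lt_trans muDvfin; apply: le_measure; rewrite ?inE //; exact: subIsetl.
pose zeta x := xi x + Complex (\1_Z x) 0.
have Lzeta : L2 mu zeta := L2_add Lxi (L2_indic mZ muZ).
pose kk x : complex R := Complex (\1_Dv x * (2 * \1_Xv x - 1)) 0.
have mkk : cmeas kk.
  apply: cmeas_real; apply: measurable_funM; first exact: measurable_indic.
  apply: measurable_funB; last exact: measurable_cst.
  by apply: measurable_funM; [exact: measurable_cst|exact: measurable_indic].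
pose g x := kk x * zeta x.
have Lg : L2 mu g.
  apply: (L2_scale Lzeta mkk ler01) => x.
  rewrite /csq /= expr0n /= addr0 !indicE.
  by case: (x \in Dv); case: (x \in Xv); rewrite /=; lra.
pose rho x := csq (zeta x).
have mrho : measurable_fun setT rho := measurable_csq (L2_cmeas Lzeta).
have rho_pos x : Dv x -> 0 < rho x.
  move=> Dx; rewrite /rho /zeta indicE.
  case: (eqVneq (xi x) 0) => [x0|nz].
    rewrite mem_set; last by split => //=; rewrite x0 /csq /= expr0n /= addr0.
    by rewrite x0 add0r /csq /= expr0n /= addr0 expr1n.
  rewrite memNset; last first.
    by move=> [_ /= /csq_eq0 x0]; move/eqP: nz.
  rewrite addr0 lt_neqAle csq_ge0 andbT; apply/eqP => /esym /csq_eq0 x0.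
  by move/eqP: nz.
pose Y := Dv `\` Xv.
have mY : measurable Y by exact: measurableD.
have muY : (0 < mu Y)%E.
  rewrite lt0e measure_ge0 andbT; apply/eqP => Y0.
  have : mu Dv = mu Xv.
    have eD : Dv = Xv `|` Y.
      apply/seteqP; split => x.
        by move=> Dx; case: (pselect (Xv x)) => ?; [left|right].
      by move=> [/XvD|[]].
    rewrite [in LHS]eD measureU //.
      by rewrite -[RHS]adde0; congr (_ + _)%E.
    by apply/seteqP; split => x // [? []].
  by move=> e; rewrite e ltxx in muXvD.
have IA0 := int_pos mXv mrho (fun x Xx => rho_pos x (XvD x Xx)) muXv0.
have IB0 := int_pos mY mrho (fun x Yx => rho_pos x (proj1 Yx)) muY.
have Ifin (A : set X) : measurable A -> (\int[mu]_(x in A) (rho x)%:E < +oo)%E.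
  move=> mA; apply: le_lt_trans (L2_fin Lzeta).
  apply: ge0_subset_integral => //.
  - exact/measurable_EFinP.
  - by move=> x _; rewrite lee_fin csq_ge0.
set IA := (\int[mu]_(x in Xv) (rho x)%:E)%E.
set IB := (\int[mu]_(x in Y) (rho x)%:E)%E.
have IAf : IA \is a fin_num by rewrite ge0_fin_numE ?Ifin // ltW.
have IBf : IB \is a fin_num by rewrite ge0_fin_numE ?Ifin // ltW.
pose eps := Num.min (fine IA) (fine IB).
have eps0 : 0 < eps by rewrite lt_min !fine_gt0 // ?IA0 ?IB0 ?Ifin.
have [s Hs] := Happ g Lg eps eps0.
have [c Hc] := Kseq hS Hr hf Lxi Hadj s.
set S := fun x => \sum_(p <- s) p.2 * projT coding f p.1 (eta p.1) x.
have mS : cmeas S.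
  apply: cmeas_sum => -[l a] /=.
  apply: cmeasM; first exact: cmeas_cst.
  apply: cmeasM; first exact: (L2_cmeas (F_L2 hf l)).
  apply: cmeas_comp; first exact: (L2_cmeas (Hadj l).1).
  exact: (S_coding_meas hS).
have mE : measurable_fun setT (fun x => (csq (g x - S x))%:E).
  by apply/measurable_EFinP; apply: measurable_csq; apply: cmeasB => //; exact: L2_cmeas Lg.
have key (A : set X) : measurable A -> A `<=` Dv ->
    {ae mu, forall x, A x -> rho x <= csq (g x - S x)} ->
    (\int[mu]_(x in A) (rho x)%:E <= \int[mu]_x (csq (g x - S x))%:E)%E.
  move=> mA AD H.
  apply: (@le_trans _ _ (\int[mu]_(x in A) (csq (g x - S x))%:E)%E).
    apply: ae_ge0_le_integral => //.
    all: try (by move=> x _; rewrite lee_fin csq_ge0).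
    all: try (by apply/measurable_EFinP/measurable_funTS).
    all: try (by apply: measurable_funTS).
    all: try (by apply: filterS H => x h Ax; rewrite lee_fin h).
  apply: ge0_subset_integral => //.
  by move=> x _; rewrite lee_fin csq_ge0.
have bZ1 x : Dv x -> xi x = 0 -> \1_Z x = 1 :> R.
  by move=> Dx x0; rewrite indicE mem_set //; split => //=; rewrite x0 /csq /= expr0n /= addr0.
have bZ0 x : xi x != 0 -> \1_Z x = 0 :> R.
  move=> nz; rewrite indicE memNset //.
  by move=> [_ /= /csq_eq0 x0]; move/eqP: nz.
case: (lerP (complex.Re c) 0) => hc.
- have := key Xv mXv XvD.
  have H : {ae mu, forall x, Xv x -> rho x <= csq (g x - S x)}.
    apply: filterS Hc => x h Xx.
    have Dx := XvD x Xx.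
    rewrite /S h // /g /kk !indicE (mem_set Dx) (mem_set Xx) /=.
    rewrite (_ : Complex _ 0 = 1); last by apply/eqP; rewrite eq_complex /= eqxx andbT; apply/eqP; ring.
    rewrite mul1r /rho /zeta.
    apply: pw1 => //; [exact: bZ1|exact: bZ0].
  move=> /(_ H) hA.
  have h1 : (IA < eps%:E)%E := le_lt_trans hA Hs.
  have h2 : eps <= fine IA by rewrite /eps ge_min lexx.
  move: h1; rewrite -(fineK IAf) lte_fin => h1.
  by have := lt_le_trans h1 h2; rewrite ltxx.
- have := key Y mY (fun x Yx => proj1 Yx).
  have H : {ae mu, forall x, Y x -> rho x <= csq (g x - S x)}.
    apply: filterS Hc => x h [Dx nXx].
    rewrite /S h // /g /kk !indicE (mem_set Dx) (memNset nXx) /=.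
    rewrite (_ : Complex _ 0 = -1); last by apply/eqP; rewrite eq_complex /= oppr0 eqxx andbT; apply/eqP; ring.
    rewrite mulN1r /rho /zeta.
    apply: pw2 => //; [exact: bZ1|exact: bZ0|exact: ltW].
  move=> /(_ H) hB.
  have h1 : (IB < eps%:E)%E := le_lt_trans hB Hs.
  have h2 : eps <= fine IB by rewrite /eps ge_min lexx orbT.
  move: h1; rewrite -(fineK IBf) lte_fin => h1.
  by have := lt_le_trans h1 h2; rewrite ltxx.
Qed.
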